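(* Let $G$ be a simple undirected graph on the vertex set $[n]=\{1,\dots,n\}$, let $t$ be the number of triangles in $G$, and let $\Delta=\max_{e\in E(G)}\delta_e$, where $\delta_e$ is the number of triangles of $G$ containing the edge $e$. Let $N$ be a positive integer and $p=1/N$. Color each vertex of $G$ independently and uniformly at random with one of $N$ colors (so each vertex receives any given color with probability $p$), and let $T$ be the number of monochromatic triangles, i.e. triangles of $G$ all three of whose vertices receive the same color. If $$p \geq \max\left( \frac{\Delta \log n}{t}, \frac{\log n}{\sqrt{t}}\right),$$ then $T\sim \mathbb{E}[T]$ with probability $1-o(1)$; that is, for every constant $\epsilon>0$, $\Pr\big[|T-\mathbb{E}[T]|\geq \epsilon\,\mathbb{E}[T]\big]=o(1)$ as $n\to\infty$.
   Context: The statement is asymptotic: $G$ (and hence $t,\Delta$) and $p$ may depend on $n$, and $o(1)$ refers to $n\to\infty$. Here $\mathbb{E}[T]=p^2 t$. This random coloring is the sampling step of the ''colorful triangle sampling'' algorithm, which keeps exactly the monochromatic edges (edges whose endpoints receive the same color), counts the triangles $T$ among them, and outputs $T/p^2$ as an estimate of $t$. *)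

(* Defs.v *)
From HB Require Import structures.
From mathcomp Require Import all_boot all_order all_algebra.
From mathcomp Require Import reals exp.
Set Implicit Arguments. Unset Strict Implicit. Unset Printing Implicit Defensive.
Import Order.TTheory GRing.Theory Num.Theory.
Local Open Scope ring_scope.

(* A simple graph on [n] is a symmetric irreflexive relation e on 'I_n. *)

Definition triangles (n : nat) (e : rel 'I_n) : {set {set 'I_n}} :=
  [set S : {set 'I_n} | (#|S| == 3)%N &&
     [forall x in S, forall y in S, (x != y) ==> e x y]].

Definition ntri (n : nat) (e : rel 'I_n) : nat := #|triangles e|.

Definition edge_tri (n : nat) (e : rel 'I_n) (u v : 'I_n) : nat :=
  #|[set S in triangles e | (u \in S) && (v \in S)]|.

Definition maxdelta (n : nat) (e : rel 'I_n) : nat :=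
  (\max_(uv : 'I_n * 'I_n | e uv.1 uv.2) edge_tri e uv.1 uv.2)%N.

Definition monoT (n N : nat) (e : rel 'I_n) (c : {ffun 'I_n -> 'I_N}) : nat :=
  #|[set S in triangles e | [exists k : 'I_N, forall x in S, c x == k]]|.

Definition unif_prob (R : realType) (n N : nat) (P : pred {ffun 'I_n -> 'I_N}) : R :=
  (#|[set c | P c]|)%:R / (#|{ffun 'I_n -> 'I_N}|)%:R.

Definition expT (R : realType) (n N : nat) (e : rel 'I_n) : R :=
  (\sum_(c : {ffun 'I_n -> 'I_N}) (monoT e c)%:R) / (#|{ffun 'I_n -> 'I_N}|)%:R.

Definition dev_prob (R : realType) (n N : nat) (e : rel 'I_n) (eps : R) : R :=
  unif_prob R (fun c : {ffun 'I_n -> 'I_N} =>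
     eps * expT R N e <= `| (monoT e c)%:R - expT R N e |).

(* Main.v *)
Require Import Defs.
From HB Require Import structures.
From mathcomp Require Import all_boot all_order all_algebra.
From mathcomp Require Import reals exp.
From mathcomp Require Import ring lra.
Import Order.TTheory GRing.Theory Num.Theory.
Local Open Scope ring_scope.
Set Implicit Arguments. Unset Strict Implicit. Unset Printing Implicit Defensive.

Section Prob.
Variables (R : realType) (n N : nat).
Hypothesis N0 : (0 < N)%N.
Local Notation Om := {ffun 'I_n -> 'I_N}.

Definition ind (S : {set 'I_n}) (k : 'I_N) (x : 'I_n) (j : 'I_N) : R :=
  if x \in S then (j == k)%:R else 1.

Definition Y (S : {set 'I_n}) (k : 'I_N) (c : Om) : R :=
  \prod_(x : 'I_n) ind S k x (c x).

Lemma sum_prod (F : 'I_n -> 'I_N -> R) :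
  \sum_(c : Om) \prod_x F x (c x) = \prod_x \sum_j F x j.
Proof. by rewrite bigA_distr_bigA. Qed.

Definition p : R := 1 / N%:R.
Lemma Npos : (0 : R) < N%:R. Proof. by rewrite ltr0n. Qed.
Lemma Np : N%:R * p = 1.
Proof. by rewrite /p mul1r divff // gt_eqF // Npos. Qed.

Lemma cardOm : (#|Om|%:R : R) = \prod_(x : 'I_n) N%:R.
Proof. by rewrite card_ffun card_ord natrX prodr_const card_ord. Qed.

Lemma sum_ind2 S S' k k' x :
  (\sum_j ind S k x j * ind S' k' x j) / N%:R =
  (if x \in S :|: S' then p else 1) * (if x \in S :&: S' then (k == k')%:R else 1).
Proof.
have hN : N%:R != 0 :> R by rewrite gt_eqF // Npos.
have s1 : forall k0 : 'I_N, \sum_(j : 'I_N) (j == k0)%:R = 1 :> R.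
  move=> k0; rewrite (bigD1 k0) //= eqxx big1 ?addr0 // => j /negbTE -> //.
rewrite /ind inE [x \in S :&: S']inE.
case: (x \in S); case: (x \in S') => /=.
- rewrite (bigD1 k) //= eqxx mul1r big1 ?addr0.
    by rewrite /p mul1r mulrC.
  by move=> j /negbTE ->; rewrite mul0r.
- under eq_bigr do rewrite mulr1. by rewrite s1 mulr1.
- rewrite (eq_bigr (fun j => (j == k')%:R)); last by move=> j _; rewrite mul1r.
  by rewrite s1 mulr1.
- under eq_bigr do rewrite mulr1. by rewrite sumr_const card_ord mulr1 divff.
Qed.


Lemma EYY S S' k k' :
  (\sum_(c : Om) Y S k c * Y S' k' c) / (#|Om|%:R) =
  p ^+ #|S :|: S'| * (k == k')%:R ^+ #|S :&: S'|.
Proof.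
rewrite (eq_bigr (fun c : Om => \prod_x (ind S k x (c x) * ind S' k' x (c x)))); last first.
  by move=> c _; rewrite /Y big_split.
rewrite (sum_prod (fun x j => ind S k x j * ind S' k' x j)) cardOm -prodf_div.
rewrite (eq_bigr _ (fun x _ => sum_ind2 S S' k k' x)) big_split /=.
by rewrite -!big_mkcond /= !prodr_const.
Qed.

Definition mono (S : {set 'I_n}) (c : Om) : bool :=
  [exists k : 'I_N, forall x in S, c x == k].
Definition X (S : {set 'I_n}) (c : Om) : R := (mono S c)%:R.

Lemma Y_forall S k c : Y S k c = ([forall x in S, c x == k])%:R.
Proof.
rewrite /Y; case: (boolP [forall x in S, c x == k]) => [/forall_inP H | /forall_inPn [x xS ne]].
  by apply: big1 => x _; rewrite /ind; case: ifP => // /H ->.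
rewrite (bigD1 x) //= /ind xS (negbTE ne) mul0r //.
Qed.



Lemma X_sum (S : {set 'I_n}) (c : Om) x0 : x0 \in S -> X S c = \sum_k Y S k c.
Proof.
move=> x0S; under eq_bigr do rewrite Y_forall.
rewrite (bigD1 (c x0)) //= big1 ?addr0; last first.
  move=> k kne; apply/eqP; rewrite pnatr_eq0 eqb0; apply/forall_inPn.
  by exists x0 => //; rewrite eq_sym.
rewrite /X; suff -> : mono S c = [forall x in S, c x == c x0] by [].
apply/existsP/idP => [[k /forall_inP H]|H].
  by apply/forall_inP => x xS; rewrite (eqP (H x xS)) (eqP (H x0 x0S)).
by exists (c x0).
Qed.

Lemma natb_pow (b : bool) m : ((b%:R : R) ^+ m.+1) = b%:R.
Proof. by case: b; rewrite ?expr1n ?expr0n. Qed.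

Definition EXX S S' := (\sum_(c : Om) X S c * X S' c) / (#|Om|%:R).

Lemma EXX_val (S S' : {set 'I_n}) x0 x1 : x0 \in S -> x1 \in S' ->
  EXX S S' = if #|S :&: S'| == 0%N then N%:R * (N%:R * p ^+ #|S :|: S'|)
             else N%:R * p ^+ #|S :|: S'|.
Proof.
move=> x0S x1S.
rewrite /EXX (eq_bigr (fun c => \sum_k \sum_k' Y S k c * Y S' k' c)); last first.
  move=> c _; rewrite (X_sum c x0S) (X_sum c x1S) mulr_suml.
  by apply: eq_bigr => k _; rewrite mulr_sumr.
rewrite exchange_big mulr_suml.
under eq_bigr => k _ do rewrite exchange_big mulr_suml.
under eq_bigr => k _ do under eq_bigr => k' _ do rewrite EYY.
case: eqP => [->|/eqP].
  under eq_bigr => k _ do under eq_bigr => k' _ do rewrite expr0 mulr1.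
  by rewrite sumr_const card_ord sumr_const card_ord !mulr_natl.
case: #|S :&: S'| => // m _.
under eq_bigr => k _ do under eq_bigr => k' _ do rewrite natb_pow.
have inner : forall k : 'I_N, \sum_k' p ^+ #|S :|: S'| * (k == k')%:R = p ^+ #|S :|: S'|.
  move=> k; rewrite (bigD1 k) //= eqxx mulr1 big1 ?addr0 // => k' kk'.
  by rewrite eq_sym (negbTE kk') mulr0.
under eq_bigr => k _ do rewrite inner.
by rewrite sumr_const card_ord mulr_natl.
Qed.



Lemma Npk k : N%:R * p ^+ k.+1 = p ^+ k.
Proof. by rewrite exprS mulrA Np mul1r. Qed.

Lemma p_ge0 : 0 <= p.
Proof. by rewrite /p mul1r invr_ge0 ler0n. Qed.

Variable e : rel 'I_n.

Lemma tri_card S : S \in triangles e -> #|S| = 3%N.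
Proof. by rewrite inE => /andP [/eqP -> _]. Qed.

Lemma tri_elem S : S \in triangles e -> exists x, x \in S.
Proof. by move=> /tri_card h; apply/card_gt0P; rewrite h. Qed.

Lemma tri_edge S u v : S \in triangles e -> u \in S -> v \in S -> u != v -> e u v.
Proof.
rewrite inE => /andP [_ /forall_inP H] uS vS uv.
by move: (H u uS) => /forall_inP /(_ v vS) /implyP; apply.
Qed.

Lemma EXX_tri S S' : S \in triangles e -> S' \in triangles e ->
  EXX S S' - p ^+ 4 <= (if (1 < #|S :&: S'|)%N then p ^+ 3 else 0)
                       + (if S == S' then p ^+ 2 else 0).
Proof.
move=> tS tS'; have [x0 x0S] := tri_elem tS; have [x1 x1S] := tri_elem tS'.
have cS := tri_card tS; have cS' := tri_card tS'.
have ge0 : forall b k, 0 <= (if b then p ^+ k else 0).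
  by move=> b k; case: b => //; apply: exprn_ge0; apply: p_ge0.
have SS : #|S :&: S'| = 3%N -> S == S'.
  move=> h; have e1 : S :&: S' == S by rewrite eqEcard subsetIl h cS.
  have e2 : S :&: S' == S' by rewrite eqEcard subsetIr h cS'.
  by rewrite -(eqP e1) -{2}(eqP e2).
have le3 : (#|S :&: S'| <= 3)%N by rewrite -cS subset_leq_card // subsetIl.
rewrite (EXX_val x0S x1S) cardsU cS cS'.
move: SS le3; case: #|S :&: S'| => [|[|[|[|m]]]] //= SS _.
- by rewrite !Npk subrr addr_ge0.
- by rewrite Npk subrr addr_ge0.
- rewrite Npk; apply: ler_wpDr; first exact: ge0.
  by rewrite lerBlDr lerDl exprn_ge0 // p_ge0.
- rewrite SS // Npk; rewrite lerBlDr addrC addrA lerDr.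
  by apply: addr_ge0; apply: exprn_ge0; apply: p_ge0.
Qed.

Lemma EXX_diag S : S \in triangles e -> EXX S S = p ^+ 2.
Proof.
move=> tS; have [x0 x0S] := tri_elem tS.
by rewrite (EXX_val x0S x0S) setUid setIid tri_card //= Npk.
Qed.


Lemma sum_edge (u v : 'I_n) (a : R) :
  \sum_(S' in triangles e) (if (u \in S') && (v \in S') then a else 0)
  = a * (edge_tri e u v)%:R.
Proof.
rewrite /edge_tri mulr_natr -sumr_const.
rewrite big_mkcond [RHS]big_mkcond /=; apply: eq_bigr => S' _.
by rewrite [S' \in [set _ in _ | _]]inE; case: (S' \in triangles e).
Qed.

Lemma pair_count S : S \in triangles e ->
  \sum_(S' in triangles e) (if (1 < #|S :&: S'|)%N then p ^+ 3 else 0)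
  <= (9 * maxdelta e)%:R * p ^+ 3.
Proof.
move=> tS.
pose F (S' : {set 'I_n}) (uv : 'I_n * 'I_n) : R :=
  if (uv.1 \in S') && (uv.2 \in S') then p ^+ 3 else 0.
have Fge0 : forall S' uv, 0 <= F S' uv.
  by move=> S' uv; rewrite /F; case: ifP => // _; apply: exprn_ge0; apply: p_ge0.
apply: (@le_trans _ _ (\sum_(S' in triangles e)
          \sum_(uv in setX S S | uv.1 != uv.2) F S' uv)).
  apply: ler_sum => S' _; case: ifP => [/card_gt1P [u [v [uI vI uv]]]|_]; last first.
    by apply: sumr_ge0 => ? _; apply: Fge0.
  rewrite (bigD1 (u, v)) /=; last first.
    by rewrite !inE uv andbT; rewrite !inE in uI vI; case/andP: uI => -> _; case/andP: vI.
  rewrite /F /=; rewrite !inE in uI vI.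
  case/andP: uI => _ ->; case/andP: vI => _ -> /=.
  by rewrite lerDl; apply: sumr_ge0 => ? _; apply: Fge0.
rewrite exchange_big /=.
apply: (@le_trans _ _ (\sum_(uv in setX S S) p ^+ 3 * (maxdelta e)%:R)).
  apply: (@le_trans _ _ (\sum_(uv in setX S S | uv.1 != uv.2) p ^+ 3 * (maxdelta e)%:R)); last first.
    rewrite [X in _ <= X](bigID (fun uv : 'I_n * 'I_n => uv.1 != uv.2)) /= lerDl.
    by apply: sumr_ge0 => ? _; apply: mulr_ge0; [apply: exprn_ge0; apply: p_ge0|apply: ler0n].
  apply: ler_sum => [[u v]] /andP [uvS /= uv]; rewrite sum_edge.
  apply: ler_wpM2l; first by apply: exprn_ge0; apply: p_ge0.
  rewrite ler_nat /maxdelta.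
  have euv : e u v.
    by rewrite inE /= in uvS; case/andP: uvS => uS vS; apply: (tri_edge tS).
  exact: (@leq_bigmax_cond _ (fun uv : 'I_n * 'I_n => e uv.1 uv.2) (fun uv => edge_tri e uv.1 uv.2) (u, v) euv).
rewrite sumr_const cardsX (tri_card tS) -mulr_natl; rewrite le_eqVlt; apply/orP; left; apply/eqP.
rewrite natrM; ring.
Qed.


Let M : R := (#|Om|)%:R.
Lemma M_gt0 : 0 < M.
Proof. by rewrite /M card_ffun card_ord ltr0n expn_gt0 N0. Qed.

Lemma sumXX S S' : \sum_(c : Om) X S c * X S' c = EXX S S' * M.
Proof. by rewrite /EXX divfK // gt_eqF // M_gt0. Qed.

Lemma ifb (b : bool) : (if b then 1 else 0 : R) = b%:R.
Proof. by case: b. Qed.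

Lemma T_sum (c : Om) : ((monoT e c)%:R : R) = \sum_(S in triangles e) X S c.
Proof.
rewrite /monoT -sum1_card natr_sum big_mkcond [RHS]big_mkcond /=.
apply: eq_bigr => S _; rewrite [S \in [set _ in _ | _]]inE /X /mono.
by case: (S \in triangles e) => //=; rewrite ifb.
Qed.

Lemma XX S c : X S c * X S c = X S c.
Proof. by rewrite /X; case: (mono S c); rewrite ?mulr1 ?mulr0. Qed.

Lemma sumT : \sum_(c : Om) ((monoT e c)%:R : R) = M * ((ntri e)%:R * p ^+ 2).
Proof.
under eq_bigr do rewrite T_sum.
rewrite exchange_big /=.
rewrite (eq_bigr (fun S => p ^+ 2 * M)); last first.
  move=> S tS; under eq_bigr do rewrite -XX.
  by rewrite sumXX EXX_diag.
rewrite sumr_const /ntri -mulr_natl; ring.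
Qed.

Lemma expT_val : expT R N e = (ntri e)%:R * p ^+ 2.
Proof.
have hM := M_gt0; rewrite /expT sumT; rewrite /M in hM *; field; exact: lt0r_neq0.
Qed.

Lemma sumT2 : \sum_(c : Om) ((monoT e c)%:R : R) ^+ 2 =
  M * \sum_(S in triangles e) \sum_(S' in triangles e) EXX S S'.
Proof.
under eq_bigr do rewrite T_sum expr2 mulr_suml.
under eq_bigr do under eq_bigr do rewrite mulr_sumr.
rewrite exchange_big /= mulr_sumr; apply: eq_bigr => S _.
rewrite exchange_big /= mulr_sumr; apply: eq_bigr => S' _.
by rewrite sumXX mulrC.
Qed.


Let B : R := (9 * maxdelta e)%:R * p ^+ 3 + p ^+ 2.

Lemma Vbound S : S \in triangles e ->
  \sum_(S' in triangles e) (EXX S S' - p ^+ 4) <= B.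
Proof.
move=> tS.
apply: le_trans (ler_sum _ (fun S' tS' => EXX_tri tS tS')) _.
rewrite big_split /=; apply: lerD; first exact: pair_count.
rewrite (bigD1 S) //= eqxx big1 ?addr0 // => S' /andP [_ ne].
by rewrite eq_sym (negbTE ne).
Qed.

Lemma sumEXX : \sum_(S in triangles e) \sum_(S' in triangles e) EXX S S'
   <= (ntri e)%:R * (B + (ntri e)%:R * p ^+ 4).
Proof.
rewrite /ntri mulr_natl -sumr_const.
apply: ler_sum => S tS.
rewrite (eq_bigr (fun S' => (EXX S S' - p ^+ 4) + p ^+ 4)); last by move=> S' _; rewrite subrK.
rewrite big_split /= sumr_const; apply: lerD; first exact: Vbound.
by rewrite mulr_natl.
Qed.

Lemma cheb (eps : R) : 0 < eps ->
  dev_prob N e eps * (eps * expT R N e) ^+ 2 <= (ntri e)%:R * B.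
Proof.
move=> eps0.
set mu := expT R N e.
have muv : mu = (ntri e)%:R * p ^+ 2 by rewrite /mu expT_val.
set A := [set c : Om | eps * mu <= `| (monoT e c)%:R - mu |].
have H1 : #|A|%:R * (eps * mu) ^+ 2 <= \sum_(c : Om) ((monoT e c)%:R - mu) ^+ 2.
  rewrite mulr_natl -sumr_const big_mkcond /=; apply: ler_sum => c _.
  case: ifP => [|_]; last exact: sqr_ge0.
  rewrite inE => h; rewrite -[X in _ <= X](real_normK (num_real _)) !expr2.
  have h0 : 0 <= eps * mu.
    by rewrite muv; apply: mulr_ge0; [apply: ltW|apply: mulr_ge0; [apply: ler0n|apply: exprn_ge0; apply: p_ge0]].
  by apply: ler_pM.
have H2 : \sum_(c : Om) ((monoT e c)%:R - mu) ^+ 2 =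
          \sum_(c : Om) ((monoT e c)%:R : R) ^+ 2 - M * mu ^+ 2.
  rewrite (eq_bigr (fun d : Om => (((monoT e d)%:R : R) ^+ 2 - mu *+ 2 * (monoT e d)%:R) + mu ^+ 2)); last first.
    by move=> d _; rewrite sqrrB; ring.
  rewrite big_split /= sumrB -mulr_sumr sumT sumr_const -mulr_natl -/M muv.
  ring.
have H3 := sumEXX.
rewrite /dev_prob /unif_prob -/A -/M mulrAC ler_pdivrMr ?M_gt0 //.
apply: le_trans H1 _; rewrite H2 sumT2.
have -> : M * mu ^+ 2 = M * ((ntri e)%:R * ((ntri e)%:R * p ^+ 4)) by rewrite muv; ring.
rewrite lerBlDr; apply: le_trans (ler_wpM2l (ltW M_gt0) H3) _.
rewrite le_eqVlt; apply/orP; left; apply/eqP; rewrite /M; ring.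
Qed.

End Prob.

Lemma final_alg (R : realFieldType) (t D p L dev eps delta : R) :
  0 < t -> 0 < p -> 0 < eps -> 0 < delta -> 1 <= L -> 0 <= D ->
  D * L <= p * t -> L ^+ 2 <= p ^+ 2 * t ->
  10 <= L * eps ^+ 2 * delta ->
  dev * (eps * (t * p ^+ 2)) ^+ 2 <= t * (9 * D * p ^+ 3 + p ^+ 2) ->
  dev <= delta.
Proof.
move=> t0 p0 e0 d0 L1 D0 h1 h2 hL hc.
set K := t ^+ 2 * p ^+ 4.
have K0 : 0 < K by rewrite /K mulr_gt0 // exprn_gt0.
have L0 : 0 < L by apply: lt_le_trans L1; rewrite ltr01.
have a1 : L * (t * (9 * D * p ^+ 3 + p ^+ 2)) <= 10 * K.
  have e1 : L * (t * (9 * D * p ^+ 3 + p ^+ 2)) = 9 * (t * p ^+ 3) * (D * L) + L * (t * p ^+ 2).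
    by ring.
  have b1 : 9 * (t * p ^+ 3) * (D * L) <= 9 * (t * p ^+ 3) * (p * t).
    by apply: ler_wpM2l => //; apply: mulr_ge0 => //; apply: mulr_ge0; [apply: ltW|apply: exprn_ge0; apply: ltW].
  have b2 : L * (t * p ^+ 2) <= L ^+ 2 * (t * p ^+ 2).
    apply: ler_wpM2r; first by apply: mulr_ge0; [apply: ltW|apply: exprn_ge0; apply: ltW].
    by rewrite expr2 ler_peMr // ltW.
  have b3 : L ^+ 2 * (t * p ^+ 2) <= p ^+ 2 * t * (t * p ^+ 2).
    by apply: ler_wpM2r => //; apply: mulr_ge0; [apply: ltW|apply: exprn_ge0; apply: ltW].
  rewrite e1; apply: le_trans (lerD b1 (le_trans b2 b3)) _.
  by rewrite /K le_eqVlt; apply/orP; left; apply/eqP; ring.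
have a2 : dev * (eps ^+ 2 * L) * K <= 10 * K.
  apply: le_trans a1; have -> : dev * (eps ^+ 2 * L) * K = L * (dev * (eps * (t * p ^+ 2)) ^+ 2).
    by rewrite /K; ring.
  by apply: ler_wpM2l => //; apply: ltW.
rewrite ler_pM2r // in a2.
have el : 0 < eps ^+ 2 * L by rewrite mulr_gt0 // exprn_gt0.
rewrite -(ler_pM2r el); apply: le_trans a2 _.
by apply: le_trans hL _; rewrite le_eqVlt; apply/orP; left; apply/eqP; ring.
Qed.

Theorem theorem2 (R : realType) (G : forall n : nat, rel 'I_n) (N : nat -> nat) :
  (forall n, symmetric (G n)) ->
  (forall n, irreflexive (G n)) ->
  (forall n, (0 < N n)%N) ->
  (exists n0 : nat, forall n : nat, (n0 <= n)%N ->
     (0 < ntri (G n))%N /\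
     Num.max ((maxdelta (G n))%:R * ln (n%:R : R) / (ntri (G n))%:R)
             (ln (n%:R : R) / Num.sqrt ((ntri (G n))%:R))
       <= 1 / (N n)%:R) ->
  forall eps : R, 0 < eps ->
  forall delta : R, 0 < delta ->
  exists n1 : nat, forall n : nat, (n1 <= n)%N ->
    dev_prob (N n) (G n) eps <= delta.
Proof.
move=> _ _ Npos [n0 Hn0] eps e0 delta d0.
have ln2 : 0 < ln (2 : R) by apply: ln_gt0; rewrite ltr1n.
set Lb : R := Num.max 1 (10 / (eps ^+ 2 * delta)).
have Lb1 : 1 <= Lb by rewrite le_max lexx.
have Lb2 : 10 / (eps ^+ 2 * delta) <= Lb by rewrite le_max lexx orbT.
have Lb0 : 0 <= Lb / ln 2.
  by apply: divr_ge0; [apply: le_trans Lb1; apply: ler01 | apply: ltW].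
pose m := Num.Def.archi_bound (Lb / ln 2).
exists (maxn n0 (2 ^ m)) => n; rewrite geq_max => /andP [hn0 hnm].
have [t0 hmax] := Hn0 n hn0.
rewrite ge_max in hmax; case/andP: hmax => ha hb.
set L := ln (n%:R : R) in ha hb *.
have LLb : Lb <= L.
  have h1 : Lb <= ln 2 *+ m.
    have := archi_boundP Lb0; rewrite ltr_pdivrMr // => h.
    by rewrite -(mulr_natr (ln (2:R))) mulrC; apply: ltW.
  apply: le_trans h1 _; rewrite -lnXn // /L ler_ln ?posrE ?exprn_gt0 //.
    by rewrite -natrX ler_nat.
  by rewrite ltr0n; apply: leq_trans hnm; rewrite expn_gt0.
have L1 : 1 <= L by apply: le_trans LLb.
have L0 : 0 <= L by apply: le_trans L1; apply: ler01.
set t : R := (ntri (G n))%:R in ha hb *.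
have tpos : 0 < t by rewrite /t ltr0n.
have hp0 : 0 < p R (N n) by rewrite /p mul1r invr_gt0 ltr0n.
apply: (@final_alg R t (maxdelta (G n))%:R (p R (N n)) L _ eps delta) => //.
- by rewrite -ler_pdivrMr.
- rewrite ler_pdivrMr ?sqrtr_gt0 // in hb.
  have -> : p R (N n) ^+ 2 * t = (p R (N n) * Num.sqrt t) ^+ 2.
    by rewrite [in RHS]exprMn sqr_sqrtr // ltW.
  by rewrite !expr2; apply: ler_pM.
- have h10 : 10 / (eps ^+ 2 * delta) <= L by apply: le_trans LLb.
  rewrite ler_pdivrMr ?mulr_gt0 ?exprn_gt0 // in h10.
  by rewrite -mulrA.
- have := cheb (Npos n) (G n) e0.
  by rewrite (expT_val R (Npos n)) natrM.
Qed.
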